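(* Let $R$ be a ring and $n\ge 1$ an integer. Then $R$ is NJ-symmetric if and only if the ring $T_n(R)$ of $n\times n$ upper triangular matrices over $R$ is NJ-symmetric.
   Context: Rings are associative with identity. $N(S)$ is the set of nilpotent elements, $J(S)$ the Jacobson radical of a ring $S$. $S$ is NJ-symmetric if for all $a,b,c\in S$, $abc\in N(S)$ implies $bac\in J(S)$. *)

(* Defs.v *)
From HB Require Import structures.
From mathcomp Require Import all_boot all_order all_algebra.
Set Implicit Arguments. Unset Strict Implicit. Unset Printing Implicit Defensive.
Import GRing.Theory.
Local Open Scope ring_scope.

Definition nilpotent_el (S : nzRingType) (x : S) : Prop := exists k : nat, x ^+ k = 0.

Definition left_ideal (S : nzRingType) (I : S -> Prop) : Prop :=
  [/\ I 0, (forall x y, I x -> I y -> I (x + y)) & (forall r x, I x -> I (r * x))].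

Definition maximal_left_ideal (S : nzRingType) (I : S -> Prop) : Prop :=
  [/\ left_ideal I, ~ I 1 &
      forall K : S -> Prop, left_ideal K -> ~ K 1 -> (forall x, I x -> K x) ->
        forall x, K x -> I x].

Definition jacobson_el (S : nzRingType) (x : S) : Prop :=
  forall I : S -> Prop, maximal_left_ideal I -> I x.

Definition NJ_symmetric (S : nzRingType) : Prop :=
  forall a b c : S, nilpotent_el (a * b * c) -> jacobson_el (b * a * c).

(* Indexed as T_(n.+1)(R), i.e. n.+1 x n.+1 matrices, so that the size is >= 1. *)

Definition upper_trig {R : nzRingType} {n : nat} : {pred 'M[R]_n.+1} :=
  fun A => [forall i : 'I_n.+1, forall j : 'I_n.+1, (j < i)%N ==> (A i j == 0)].

Lemma upper_trigP (R : nzRingType) n (A : 'M[R]_n.+1) :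
  reflect (forall i j : 'I_n.+1, (j < i)%N -> A i j = 0) (A \in upper_trig).
Proof.
apply: (iffP forallP) => [H i j lt_ji | H i].
  by move: (H i) => /forallP /(_ j) /implyP /(_ lt_ji) /eqP.
by apply/forallP => j; apply/implyP => lt_ji; apply/eqP; apply: H.
Qed.

Lemma upper_trig_subring_closed (R : nzRingType) n :
  subring_closed (@upper_trig R n).
Proof.
split.
- apply/upper_trigP => i j lt_ji; rewrite mxE; case: eqP => [ij|//].
  by rewrite ij ltnn in lt_ji.
- move=> A B /upper_trigP HA /upper_trigP HB; apply/upper_trigP => i j lt_ji.
  by rewrite !mxE HA // HB // subrr.
- move=> A B /upper_trigP HA /upper_trigP HB; apply/upper_trigP => i j lt_ji.
  rewrite !mxE big1 // => k _.
  case: (ltnP k i) => [lt_ki | le_ik]; first by rewrite HA // mul0r.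
  by rewrite HB ?mulr0 // (leq_trans lt_ji le_ik).
Qed.

Section UpperTriangular.
Variables (R : nzRingType) (n : nat).

Record upper_trig_mx := UpperTrigMx {
  utval :> 'M[R]_n.+1;
  _ : utval \in @upper_trig R n
}.

HB.instance Definition _ := [isSub for utval].
HB.instance Definition _ := [Choice of upper_trig_mx by <:].
HB.instance Definition _ := GRing.isSubringClosed.Build _ (@upper_trig R n)
  (upper_trig_subring_closed R n).
HB.instance Definition _ := [SubChoice_isSubNzRing of upper_trig_mx by <:].

End UpperTriangular.

Notation T_ R n := (upper_trig_mx R n.-1).

(* Main.v *)
Require Import Defs.
From HB Require Import structures.
From mathcomp Require Import all_boot all_order all_algebra.
From mathcomp Require classical_sets boolp.
From Stdlib Require Import Classical.
Set Implicit Arguments. Unset Strict Implicit. Unset Printing Implicit Defensive.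
Import GRing.Theory.
Local Open Scope ring_scope.

Section Gen.
Variable S : nzRingType.

Lemma jac_of_unit (x : S) :
  (forall r : S, exists u, u * (1 - r * x) = 1) -> jacobson_el x.
Proof.
move=> H I [[I0 ID IM] NI1 Imax].
apply: NNPP => Nx.
pose K := fun y => exists i r, I i /\ y = i + r * x.
have KL : left_ideal K.
  split.
  - by exists 0, 0; rewrite mul0r addr0.
  - move=> y z [i [r [Ii ->]]] [j [s [Ij ->]]]; exists (i + j), (r + s); split.
      exact: ID.
    by rewrite mulrDl addrACA.
  - move=> t y [i [r [Ii ->]]]; exists (t * i), (t * r); split; first exact: IM.
    by rewrite mulrDr mulrA.
have Kx : K x by exists 0, 1; rewrite mul1r add0r.
have K1 : K 1.
  apply: NNPP => NK1; apply: Nx; apply: (Imax K KL NK1) => //.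
  by move=> y Iy; exists y, 0; rewrite mul0r addr0.
case: K1 => i [r [Ii E]].
have Ei : 1 - r * x = i by rewrite E addrK.
move/(_ r): H => [u Hu].
by apply: NI1; rewrite -Hu Ei; apply: IM.
Qed.

Lemma exists_max (L : S -> Prop) : left_ideal L -> ~ L 1 ->
  exists I, maximal_left_ideal I /\ (forall y, L y -> I y).
Proof.
move=> LL NL1.
pose P := fun I : S -> Prop => left_ideal I /\ ~ I 1 /\ (forall y, L y -> I y).
pose T := {I : S -> Prop | P I}.
have PL : P L by split => //; split.
pose Rl := fun a b : T => boolp.asbool (forall y, sval a y -> sval b y).
have Hrefl : forall a, Rl a a by move=> a; apply/boolp.asboolP.
have Htr : forall a b c, Rl a b -> Rl b c -> Rl a c.
  move=> a b c /boolp.asboolP Hab /boolp.asboolP Hbc; apply/boolp.asboolP => y /Hab; exact: Hbc.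
have Hub : forall A : classical_sets.set T, classical_sets.total_on A (fun x y => Rl x y) ->
   exists t, forall s, A s -> Rl s t.
  move=> A Atot.
  pose U := fun y => L y \/ exists a, A a /\ sval a y.
  have PU : P U.
    split; last split.
    + split.
      * by left; case: LL.
      * move=> y z Uy Uz.
        have [Ly|[a [Aa ay]]] := Uy; have [Lz|[b [Ab bz]]] := Uz.
        -- by left; case: LL => _ D _; exact: D.
        -- right; exists b; split => //; case: (svalP b) => [[_ D _] [_ Lb]].
           by apply: D => //; exact: Lb.
        -- right; exists a; split => //; case: (svalP a) => [[_ D _] [_ La]].
           by apply: D => //; exact: La.
        -- have [/boolp.asboolP ab|/boolp.asboolP ba] := Atot a b Aa Ab.
           ++ right; exists b; split => //; case: (svalP b) => [[_ D _] _].
              by apply: D => //; exact: ab.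
           ++ right; exists a; split => //; case: (svalP a) => [[_ D _] _].
              by apply: D => //; exact: ba.
      * move=> r y [Ly|[a [Aa ay]]].
          by left; case: LL => _ _ M; exact: M.
        by right; exists a; split => //; case: (svalP a) => [[_ _ M] _]; exact: M.
    + move=> [//|[a [_ a1]]]; by case: (svalP a) => [_ [N _]].
    + by move=> y Ly; left.
  exists (exist _ U PU) => a Aa; apply/boolp.asboolP => y ay /=.
  by right; exists a.
have [t tmax] := @classical_sets.ZL_preorder T (exist _ L PL) Rl Hrefl Htr Hub.
exists (sval t); split; last by case: (svalP t) => [_ [_ H]].
case: (svalP t) => [LI [N1 LsubI]].
split => // K KL NK1 IK.
have PK : P K by split => //; split => // y /LsubI /IK.
have : Rl t (exist _ K PK) by apply/boolp.asboolP.
by move/tmax => /boolp.asboolP.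
Qed.

Lemma unit_of_jac (x : S) : jacobson_el x -> forall r : S, exists u, u * (1 - r * x) = 1.
Proof.
move=> Jx r; apply: NNPP => Nu.
pose L := fun y => exists s, y = s * (1 - r * x).
have LL : left_ideal L.
  split.
  - by exists 0; rewrite mul0r.
  - by move=> y z [s ->] [t ->]; exists (s + t); rewrite mulrDl.
  - by move=> t y [s ->]; exists (t * s); rewrite mulrA.
have NL1 : ~ L 1 by move=> [s E]; apply: Nu; exists s.
have [I [[[I0 ID IM] NI1 Imax] LI]] := exists_max LL NL1.
have Ix := Jx I (And3 (And3 I0 ID IM) NI1 Imax).
apply: NI1.
have -> : (1 : S) = (1 - r * x) + r * x by rewrite subrK.
apply: ID; last exact: IM.
by apply: LI; exists 1; rewrite mul1r.
Qed.

End Gen.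

Section Mat.
Variables (R : nzRingType) (m : nat).
Local Notation T := (upper_trig_mx R m).

Lemma utP (A : T) (i j : 'I_m.+1) : (j < i)%N -> val A i j = 0.
Proof. by move: (valP A) => /upper_trigP; apply. Qed.

Lemma diag_mul (A B : T) (i : 'I_m.+1) : val (A * B) i i = val A i i * val B i i.
Proof.
rewrite rmorphM /= mxE (bigD1 i) //= big1 ?addr0 // => k nk.
case: (ltngtP k i) => [lt|gt|/val_inj eq]; last by rewrite eq eqxx in nk.
  by rewrite utP // mul0r.
by rewrite (utP B) // mulr0.
Qed.

Lemma diag_exp (A : T) k (i : 'I_m.+1) : val (A ^+ k) i i = (val A i i) ^+ k.
Proof.
elim: k => [|k IH]; first by rewrite !expr0 rmorph1 mxE eqxx.
by rewrite !exprS diag_mul IH.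
Qed.

Lemma strict_nil (N : 'M[R]_m.+1) :
  (forall i j : 'I_m.+1, (j <= i)%N -> N i j = 0) ->
  forall k (i j : 'I_m.+1), (j < i + k)%N -> (N ^+ k) i j = 0.
Proof.
move=> HN; elim=> [|k IH] i j lt.
  by rewrite expr0 mxE; case: eqP => // eij; rewrite eij addn0 ltnn in lt.
rewrite exprS mxE big1 // => l _.
case: (leqP l i) => [le|gt]; first by rewrite HN // mul0r.
by rewrite IH ?mulr0 // (leq_trans lt) // addnS -addSn leq_add2r.
Qed.

Lemma geom (x : T) k : (\sum_(i < k) x ^+ i) * (1 - x) = 1 - x ^+ k.
Proof.
elim: k => [|k IH]; first by rewrite big_ord0 mul0r expr0 subrr.
rewrite big_ord_recr /= mulrDl IH mulrBr mulr1 exprSr.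
by rewrite addrA subrK.
Qed.

Lemma diag_J (M : T) : (forall i, jacobson_el (val M i i)) -> jacobson_el M.
Proof.
move=> HM; apply: jac_of_unit => X.
pose P := 1 - X * M.
have Pii : forall i, val P i i = 1 - val X i i * val M i i.
  by move=> i; rewrite /P mxE mxE -diag_mul eqxx; congr (_ + _); rewrite mxE.
have : forall i, exists w, w * val P i i = 1.
  by move=> i; rewrite Pii; apply: unit_of_jac.
move=> /fin_all_exists [w Hw].
have Dup : (diag_mx (\row_i w i)) \in @upper_trig R m.
  apply/upper_trigP => i j lt; rewrite mxE.
  by case: eqP => [eij|_]; [rewrite eij ltnn in lt | rewrite mulr0n].
pose D : T := UpperTrigMx Dup.
pose N := 1 - D * P.
have Nstrict : forall i j : 'I_m.+1, (j <= i)%N -> val N i j = 0.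
  move=> i j; rewrite leq_eqVlt => /orP [/eqP/val_inj ->|lt]; last exact: utP.
  rewrite /N mxE mxE eqxx [X in _ + X]mxE diag_mul.
  by rewrite [val D i i]mxE eqxx mulr1n mxE Hw subrr.
have N0 : N ^+ m.+1 = 0.
  apply: val_inj; rewrite rmorphXn rmorph0; apply/matrixP => i j.
  rewrite [RHS]mxE; apply: strict_nil => //.
  by rewrite addnS ltnS (leq_trans (ltnSE (ltn_ord j))) // leq_addl.
exists ((\sum_(k < m.+1) N ^+ k) * D).
have DP : D * P = 1 - N by rewrite /N opprB addrC subrK.
by rewrite -mulrA -/P DP geom N0 subr0.
Qed.

Lemma sc_up (a : R) : (a%:M : 'M[R]_m.+1) \in @upper_trig R m.
Proof.
apply/upper_trigP => i j lt; rewrite mxE.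
by case: eqP => [eij|_]; [rewrite eij ltnn in lt | rewrite mulr0n].
Qed.
Definition sc (a : R) : T := UpperTrigMx (sc_up a).

Lemma scM (a b : R) : sc a * sc b = sc (a * b).
Proof. by apply: val_inj; rewrite rmorphM /= scalar_mxM. Qed.

Lemma scX (a : R) k : sc a ^+ k = sc (a ^+ k).
Proof.
elim: k => [|k IH].
  by apply: val_inj; rewrite rmorph1 /= expr0.
by rewrite !exprS IH scM.
Qed.

Lemma sc0 : sc 0 = 0.
Proof. by apply: val_inj; rewrite rmorph0; apply/matrixP => i j; rewrite !mxE mul0rn. Qed.

Lemma e00_up (r : R) : (\matrix_(i, j) (if (i == ord0) && (j == ord0) then r else 0) : 'M[R]_m.+1)
   \in @upper_trig R m.
Proof.
apply/upper_trigP => i j lt; rewrite mxE.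
case: eqP => // ei; rewrite ei in lt; by [].
Qed.
Definition e00 (r : R) : T := UpperTrigMx (e00_up r).

Lemma e00E r : val (e00 r) ord0 ord0 = r.
Proof. by rewrite /= mxE !eqxx. Qed.

Lemma max_transfer (I : R -> Prop) : maximal_left_ideal I ->
  maximal_left_ideal (fun A : T => I (val A ord0 ord0)).
Proof.
move=> [[I0 ID IM] NI1 Imax].
have v0 : val (0 : T) ord0 ord0 = 0 by rewrite rmorph0 mxE.
have vD : forall A B : T, val (A + B) ord0 ord0 = val A ord0 ord0 + val B ord0 ord0.
  by move=> A B; rewrite rmorphD mxE.
have v1 : val (1 : T) ord0 ord0 = 1 by rewrite rmorph1 mxE eqxx.
split.
- split; first by rewrite v0.
    by move=> A B IA IB; rewrite vD; apply: ID.
  by move=> A B IB; rewrite diag_mul; apply: IM.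
- by rewrite v1.
move=> K [K0 KD KM] NK1 IK A KA.
pose K' := fun x => exists M : T, K M /\ val M ord0 ord0 = x.
have K'L : left_ideal K'.
  split.
  - by exists 0; split => //.
  - by move=> x y [M [KM1 <-]] [M' [KM' <-]]; exists (M + M'); split; [apply: KD | rewrite vD].
  - move=> r x [M [KM1 <-]]; exists (e00 r * M); split; first exact: KM.
    by rewrite diag_mul e00E.
have NK'1 : ~ K' 1.
  move=> [M [KM1 M1]]; apply: NK1.
  have -> : (1 : T) = M + (1 - M) by rewrite addrC subrK.
  apply: KD => //; apply: IK.
  by rewrite vD v1 rmorphN mxE M1 subrr.
have IK' : forall x, I x -> K' x.
  move=> x Ix; exists (e00 x); split; last exact: e00E.
  by apply: IK; rewrite e00E.
by apply: (Imax K' K'L NK'1 IK'); exists A.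
Qed.

End Mat.

Theorem corollary2p23 (R : nzRingType) (n : nat) (hn : (1 <= n)%N) :
  NJ_symmetric R <-> NJ_symmetric (T_ R n).
Proof.
case: n hn => // m _ /=; split.
- move=> HR A B C [k Hk]; apply: diag_J => i.
  rewrite !diag_mul; apply: HR; exists k.
  by rewrite -!diag_mul -diag_exp Hk rmorph0 mxE.
- move=> HT a b c [k Hk] I MI.
  have := HT (sc m a) (sc m b) (sc m c).
  rewrite !scM => H.
  have Hn : nilpotent_el (sc m (a * b * c)) by exists k; rewrite scX Hk sc0.
  by have := H Hn _ (max_transfer m MI); rewrite /= mxE eqxx mulr1n.
Qed.
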